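(* Let $n\geqslant 2$. The set $\{x_1,x_2,\ldots,x_n\}$ generates the monoid $\mathcal{AO}_n$.
   Context: Let $\Omega_n=\{1<2<\cdots<n\}$ and $\mathcal{I}_n$ the monoid of all partial injective maps of $\Omega_n$, composed left to right. $\mathcal{AI}_n$ is the set of all $\alpha\in\mathcal{I}_n$ with $\alpha=\sigma|_{\mathrm{Dom}(\alpha)}$ for some even permutation $\sigma$; $\mathcal{POI}_n$ is the set of order-preserving elements and $\mathcal{AO}_n=\mathcal{AI}_n\cap\mathcal{POI}_n$. Let $X_i=\Omega_n\setminus\{i\}$. For subsets $A,B$ with $|A|=|B|$ there is a unique order-preserving partial permutation with domain $A$ and image $B$. Define $x_1,\dots,x_n$ as the order-preserving partial permutations with: $x_1$: domain $X_1$, image $X_n$ if $n$ is odd and image $X_{n-1}$ if $n$ is even; $x_2$: domain $X_2$, image $X_{n-1}$ if $n$ is odd and image $X_n$ if $n$ is even; $x_i$ ($3\leqslant i\leqslant n$): domain $X_i$, image $X_{i-2}$. *)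

(* Defs.v *)
From mathcomp Require Import all_boot all_order all_fingroup.
Set Implicit Arguments. Unset Strict Implicit. Unset Printing Implicit Defensive.

(* Omega_n = {1 < ... < n} is modelled by 'I_n: the ordinal k stands for k+1. *)

Definition pinjmap (n : nat) := {ffun 'I_n -> option 'I_n}.

Definition dom n (f : pinjmap n) : {set 'I_n} := [set x | f x != None].

Definition pinj n (f : pinjmap n) : Prop :=
  forall x y : 'I_n, f x != None -> f x = f y -> x = y.

Definition In_ n (f : pinjmap n) : Prop := pinj f.

(* composition left to right: (f g) x = g (f x) *)
Definition pcomp n (f g : pinjmap n) : pinjmap n := [ffun x => obind g (f x)].
Definition pid n : pinjmap n := [ffun x => Some x].

Definition AI n (f : pinjmap n) : Prop :=
  In_ f /\ exists s : 'S_n, ~~ odd_perm s /\ forall x, x \in dom f -> f x = Some (s x).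

Definition POI n (f : pinjmap n) : Prop :=
  In_ f /\ forall x y : 'I_n, forall fx fy : 'I_n,
    f x = Some fx -> f y = Some fy -> x <= y -> fx <= fy.

Definition AO n (f : pinjmap n) : Prop := AI f /\ POI f.

Definition Xset n (k : nat) : {set 'I_n} := [set x : 'I_n | x.+1 != k].

(* the order-preserving partial permutation with domain A and image B
   (for |A| = |B|): the j-th smallest element of A goes to the j-th
   smallest element of B (enum of a set of ordinals is increasing). *)
Definition opp n (A B : {set 'I_n}) : pinjmap n :=
  [ffun x => if x \in A then Some (nth x (enum B) (index x (enum A))) else None].

Definition gen_target (n i : nat) : nat :=
  if i == 1 then (if odd n then n else n - 1)
  else if i == 2 then (if odd n then n - 1 else n)
  else i - 2.

Definition gen n (i : nat) : pinjmap n := opp (Xset n i) (Xset n (gen_target n i)).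

Definition word_prod n (s : seq nat) : pinjmap n :=
  foldl (@pcomp n) (pid n) [seq gen n i | i <- s].

Arguments word_prod : clear implicits.
Arguments gen : clear implicits.
Arguments pid : clear implicits.

(* Main.v *)
Require Import Defs.
From mathcomp Require Import all_boot all_order all_fingroup.
From mathcomp Require Import zify.
Set Implicit Arguments. Unset Strict Implicit. Unset Printing Implicit Defensive.

Notation pdom := Defs.dom.
Notation pcmp := Defs.pcomp.
Notation pidm := Defs.pid.

Section Basics.
Variable n : nat.
Implicit Types f g h : pinjmap n.

Definition img f : {set 'I_n} := [set y | [exists x, f x == Some y]].

Lemma inimgP f y : reflect (exists x, f x = Some y) (y \in img f).
Proof. rewrite inE; apply: (iffP existsP) => [[x /eqP]|[x Hx]]; exists x => //; by rewrite Hx. Qed.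

Lemma indomP f x : reflect (exists y, f x = Some y) (x \in pdom f).
Proof. rewrite inE; case: (f x) => [y|] /=; constructor; [by exists y|by case]. Qed.

Lemma pmapP f g : (forall x, f x = g x) -> f = g.
Proof. move=> H. apply/ffunP. exact: H. Qed.

Definition mono f := forall x y : 'I_n, forall fx fy : 'I_n,
    f x = Some fx -> f y = Some fy -> x <= y -> fx <= fy.

Lemma pcompA f g h : pcmp f (pcmp g h) = pcmp (pcmp f g) h.
Proof. apply: pmapP => x; rewrite !ffunE; case: (f x) => //= y; rewrite ffunE. by []. Qed.

Lemma pcomp_id f : pcmp f (pidm n) = f.
Proof. apply: pmapP => x; rewrite !ffunE; case: (f x) => //= y; by rewrite ffunE. Qed.

Lemma pid_comp f : pcmp (pidm n) f = f.
Proof. apply: pmapP => x; by rewrite !ffunE. Qed.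

Lemma pinj_comp f g : pinj f -> pinj g -> pinj (pcmp f g).
Proof.
move=> pf pg x y; rewrite !ffunE.
case Ex: (f x) => [u|] //=; case Ey: (f y) => [v|] /= Hn Heq; last by rewrite Heq in Hn.
have uv : u = v by apply: (pg u v).
by apply: (pf x y); rewrite ?Ex ?Ey ?uv.
Qed.

Lemma mono_comp f g : mono f -> mono g -> mono (pcmp f g).
Proof.
move=> mf mg x y fx fy; rewrite !ffunE.
case Ex: (f x) => [u|] //=; case Ey: (f y) => [v|] //= gu gv xy.
exact: (mg u v fx fy gu gv (mf _ _ _ _ Ex Ey xy)).
Qed.

Definition rk (A : {set 'I_n}) (y : 'I_n) := #|[set z in A | z < y]|.

Lemma rk_inj (A : {set 'I_n}) (y1 y2 : 'I_n) : y1 \in A -> y2 \in A -> rk A y1 = rk A y2 -> y1 = y2.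
Proof.
wlog: y1 y2 / y1 <= y2 => [W|le12] H1 H2 E.
  case: (leqP y1 y2) => h; first exact: W.
  by symmetry; apply: W => //; apply: ltnW.
case: (ltngtP y1 y2) le12 => // [lt12 _|]; last by move=> /val_inj.
have : [set z in A | z < y1] \proper [set z in A | z < y2].
  apply/properP; split.
    by apply/subsetP => z; rewrite !inE => /andP[-> /ltn_trans]; apply.
  by exists y1; rewrite !inE ?H1 ?lt12 ?ltnn.
by move/proper_card; rewrite /rk in E; rewrite E ltnn.
Qed.

Definition F0 f (x : 'I_n) := odflt x (f x).

Lemma F0_inj f : pinj f -> {in pdom f &, injective (F0 f)}.
Proof.
move=> pf x y /indomP[u Hu] /indomP[v Hv]; rewrite /F0 Hu Hv /= => E.
by apply: pf; rewrite Hu // Hv E.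
Qed.

Lemma img_imset f : img f = F0 f @: pdom f.
Proof.
apply/setP => y; apply/inimgP/imsetP => [[x Hx]|[x /indomP[u Hu] ->]].
  by exists x; [apply/indomP; exists y | rewrite /F0 Hx].
by exists x; rewrite /F0 Hu.
Qed.

Lemma card_img f : pinj f -> #|img f| = #|pdom f|.
Proof. by move=> pf; rewrite img_imset card_in_imset //; apply: F0_inj. Qed.

Lemma rk_img f x y : pinj f -> mono f -> f x = Some y -> rk (img f) y = rk (pdom f) x.
Proof.
move=> pf mf fx; rewrite /rk.
have -> : [set z in img f | z < y] = F0 f @: [set z in pdom f | z < x].
  apply/setP => w; rewrite inE; apply/andP/imsetP.
    move=> [/inimgP[z fz] wy]; exists z; last by rewrite /F0 fz.
    rewrite inE; apply/andP; split; first by apply/indomP; exists w.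
    rewrite ltnNge; apply/negP => xz.
    by have := mf _ _ _ _ fx fz xz; rewrite leqNgt wy.
  move=> [z]; rewrite inE => /andP[/indomP[u fz] zx]; rewrite /F0 fz /= => ->.
  split; first by apply/inimgP; exists z.
  have := mf _ _ _ _ fz fx (ltnW zx); rewrite leq_eqVlt => /orP[/eqP uy|//].
  have : z = x by apply: pf; rewrite fz // fx; congr Some; apply: val_inj.
  by move=> zx'; rewrite zx' ltnn in zx.
rewrite card_in_imset //; apply: sub_in2 (F0_inj pf) => z; rewrite inE => /andP[].
by [].
Qed.

Lemma uniqueness f g : pinj f -> mono f -> pinj g -> mono g ->
  pdom f = pdom g -> img f = img g -> f = g.
Proof.
move=> pf mf pg mg Ed Ei; apply: pmapP => x.
case Ef: (f x) => [y|]; case Eg: (g x) => [y'|] //.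
- congr Some; apply: (@rk_inj (img f)).
  + by apply/inimgP; exists x.
  + by rewrite Ei; apply/inimgP; exists x.
  + by rewrite (rk_img pf mf Ef) Ed -(rk_img pg mg Eg) Ei.
- have : x \in pdom f by apply/indomP; exists y.
  by rewrite Ed; move/indomP => [z]; rewrite Eg.
- have : x \in pdom g by apply/indomP; exists y'.
  by rewrite -Ed; move/indomP => [z]; rewrite Ef.
Qed.


Lemma enum_sorted (A : {set 'I_n}) : sorted (fun x y : 'I_n => x < y) (enum A).
Proof.
have -> : enum A = filter (mem A) (enum 'I_n) by rewrite enumT.
apply: sorted_filter; first by move=> x y z; apply: ltn_trans.
have := iota_ltn_sorted 0 n; rewrite -val_enum_ord sorted_map.
by [].
Qed.

Lemma index_lt (A : {set 'I_n}) x : x \in A -> index x (enum A) < #|A|.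
Proof. by move=> xA; rewrite cardE index_mem mem_enum. Qed.

Lemma sorted_nth_lt (A : {set 'I_n}) x0 y0 i j : i < #|A| -> j < #|A| -> i < j ->
  nth x0 (enum A) i < nth y0 (enum A) j.
Proof.
move=> hi hj ij; rewrite (set_nth_default x0 y0); last by rewrite -cardE.
have := @sorted_ltn_nth _ (fun x y : 'I_n => x < y) (fun x y z => @ltn_trans x y z) x0 (enum A) (enum_sorted A).
by apply; rewrite ?inE -?cardE.
Qed.

Lemma opp_props (A B : {set 'I_n}) : #|A| = #|B| ->
  [/\ pinj (opp A B), mono (opp A B), pdom (opp A B) = A & img (opp A B) = B].
Proof.
move=> cAB.
have dA : pdom (opp A B) = A.
  by apply/setP => x; rewrite inE ffunE; case: (x \in A).
have pi : pinj (opp A B).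
  move=> x y; rewrite !ffunE; case xA: (x \in A) => //; case yA: (y \in A) => // _ [].
  rewrite (set_nth_default x y); last by rewrite -cardE -cAB index_lt.
  move/eqP; rewrite nth_uniq ?enum_uniq -?cardE -?cAB ?index_lt //.
  move/eqP=> E; have := @nth_index _ x x (enum A); rewrite E nth_index ?mem_enum //.
  by move=> ->; rewrite ?mem_enum.
have mo : mono (opp A B).
  move=> x y fx fy; rewrite !ffunE; case: ifP => xA //; case: ifP => yA // [E1] [E2] xy; subst fx fy.
  case: (ltngtP (index x (enum A)) (index y (enum A))) => h.
  - by apply: ltnW; apply: sorted_nth_lt; rewrite -?cAB ?index_lt.
  - have := sorted_nth_lt x y (index_lt yA) (index_lt xA) h.
    by rewrite !nth_index ?mem_enum // ltnNge xy.
  - by rewrite h (set_nth_default x y) // -cardE -cAB index_lt.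
split => //.
apply/eqP; rewrite eqEcard card_img // dA cAB leqnn andbT.
apply/subsetP => y /inimgP[x]; rewrite ffunE; case: (x \in A) (@index_lt A x) => // H [<-].
by rewrite -mem_enum mem_nth // -cardE -cAB H.
Qed.


Definition shift (a b x : nat) : nat :=
  if a < b then (if (a < x) && (x <= b) then x.-1 else x)
  else (if (b <= x) && (x < a) then x.+1 else x).

Implicit Types (a b c x y : 'I_n).

Lemma shift_lt (a b x : 'I_n) : shift a b x < n.
Proof. have := ltn_ord a; have := ltn_ord b; have := ltn_ord x. rewrite /shift; repeat case: ifP; lia. Qed.

Definition Emap (a b x : 'I_n) : 'I_n := insubd x (shift a b x).

Lemma val_Emap a b x : nat_of_ord (Emap a b x) = shift a b x.
Proof. by rewrite -[nat_of_ord _]/(val _) val_insubd shift_lt. Qed.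

Lemma valE (x : 'I_n) : val x = nat_of_ord x.
Proof. by []. Qed.

Lemma oeq (x y : 'I_n) : (x == y) = (nat_of_ord x == nat_of_ord y).
Proof. by []. Qed.

Definition E (a b : 'I_n) : pinjmap n := [ffun x => if x == a then None else Some (Emap a b x)].

Lemma Emap_neq a b x : x != a -> Emap a b x != b.
Proof. rewrite !oeq val_Emap /shift; repeat case: ifP; lia. Qed.

Lemma Emap_lt a b x y : x != a -> y != a -> x < y -> Emap a b x < Emap a b y.
Proof. rewrite !oeq !val_Emap /shift; repeat case: ifP; lia. Qed.

Lemma Emap_inj a b x y : x != a -> y != a -> Emap a b x = Emap a b y -> x = y.
Proof. move=> hx hy h0; have := congr1 (@nat_of_ord n) h0; rewrite !val_Emap => h; apply: val_inj; rewrite !valE; move: h hx hy; rewrite !oeq /shift; repeat case: ifP; lia. Qed.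

Lemma Emap_inv a b x : x != a -> Emap b a (Emap a b x) = x.
Proof. move=> hx; apply: val_inj; rewrite !valE; rewrite !val_Emap; move: hx; rewrite oeq /shift; repeat case: ifP; lia. Qed.

Lemma Emap_comp a b c x : x != a -> Emap b c (Emap a b x) = Emap a c x.
Proof. move=> hx; apply: val_inj; rewrite !valE; rewrite !val_Emap; move: hx; rewrite oeq /shift; repeat case: ifP; lia. Qed.

Lemma E_pinj a b : pinj (E a b).
Proof.
move=> x y; rewrite !ffunE; case: ifP => hx //; case: ifP => hy // _ [].
by apply: Emap_inj; rewrite ?hx ?hy.
Qed.

Lemma E_mono a b : mono (E a b).
Proof.
move=> x y fx fy; rewrite !ffunE; case: ifP => hx //; case: ifP => hy // [<-] [<-].
rewrite leq_eqVlt => /orP[/eqP xy|xy]; first by rewrite (val_inj xy).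
by apply: ltnW; apply: Emap_lt; rewrite ?hx ?hy.
Qed.

Lemma E_dom a b : pdom (E a b) = [set~ a].
Proof. by apply/setP => x; rewrite !inE ffunE; case: (x == a). Qed.

Lemma E_img a b : img (E a b) = [set~ b].
Proof.
apply/eqP; rewrite eqEcard (card_img (@E_pinj a b)) E_dom !cardsC1 leqnn andbT.
apply/subsetP => y /inimgP[x]; rewrite ffunE; case: ifP => // hx [<-].
by rewrite !inE Emap_neq ?hx.
Qed.

Lemma E_comp a b c : pcmp (E a b) (E b c) = E a c.
Proof.
apply: pmapP => x; rewrite !ffunE; case: ifP => hx //=.
by rewrite ffunE (negbTE (Emap_neq _ _)) ?hx // Emap_comp ?hx.
Qed.

Definition tf (a b x : 'I_n) : 'I_n := if x == a then b else Emap a b x.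

Lemma tf_inj a b : injective (tf a b).
Proof.
move=> x y; rewrite /tf; case: ifP => hx; case: ifP => hy.
- by move: hx hy => /eqP -> /eqP ->.
- by move=> E1; have := Emap_neq b (negbT hy); rewrite -E1 eqxx.
- by move=> E1; have := Emap_neq b (negbT hx); rewrite E1 eqxx.
- by apply: Emap_inj; rewrite ?hx ?hy.
Qed.

Definition tau a b : {perm 'I_n} := perm (@tf_inj a b).

Lemma tauE a b x : tau a b x = tf a b x.
Proof. by rewrite permE. Qed.

Lemma E_tau a b x : x != a -> E a b x = Some (tau a b x).
Proof. by move=> hx; rewrite ffunE tauE /tf (negbTE hx). Qed.

Lemma tau_aa a : tau a a = 1%g.
Proof.
apply/permP => x; rewrite perm1 tauE /tf; case: ifP => [/eqP->//|hx].
by apply: val_inj; rewrite !valE; rewrite val_Emap /shift; repeat case: ifP; lia.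
Qed.

Lemma tau_step a b b' : a <= b -> val b' = b.+1 -> tau a b' = (tau a b * tperm b b')%g.
Proof.
move=> ab hb; apply/permP => x; rewrite permM !tauE /tf.
case: ifP => hx.
  by rewrite tpermL.
case: tpermP.
- move=> E1; apply: val_inj; rewrite !valE; move: (congr1 (@nat_of_ord n) E1); rewrite !val_Emap hb.
  move: hx; rewrite oeq /shift; repeat case: ifP; lia.
- move=> E1; apply: val_inj; rewrite !valE; move: (congr1 (@nat_of_ord n) E1); rewrite !val_Emap hb.
  move: hx; rewrite oeq /shift; repeat case: ifP; lia.
- move=> /eqP h1 /eqP h2; apply: val_inj; rewrite !valE; move: h1 h2; rewrite !oeq !val_Emap hb.
  move: hx; rewrite oeq /shift; repeat case: ifP; lia.
Qed.

Lemma odd_tau_le a : forall k (b : 'I_n), val b = a + k -> odd_perm (tau a b) = odd (a + b).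
Proof.
elim=> [|k IH] b; rewrite valE => hb.
  have -> : b = a by apply: val_inj; rewrite !valE; rewrite hb addn0.
  by rewrite tau_aa odd_perm1 addnn odd_double.
have hlt : a + k < n by have := ltn_ord b; lia.
rewrite (@tau_step a (Ordinal hlt) b) /= ?hb; try lia.
rewrite odd_permM IH // odd_tperm.
have -> : (Ordinal hlt != b) = true by rewrite oeq /= hb; lia.
rewrite /= !addnS /= addnA; by case: (odd (a + a + k)).
Qed.

Lemma odd_tau a b : odd_perm (tau a b) = odd (a + b).
Proof.
case: (leqP a b) => h.
  by apply: (odd_tau_le (k := b - a)); rewrite valE; lia.
have E1 : (tau b a * tau a b = 1)%g.
  apply/permP => x; rewrite permM perm1 !tauE /tf.
  case: (eqVneq x b) => [->|hx]; first by rewrite !eqxx.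
  by rewrite (negbTE (Emap_neq _ hx)) Emap_inv.
have := congr1 (@odd_perm _) E1; rewrite odd_permM odd_perm1 (odd_tau_le (k := a - b)); last by rewrite valE; lia.
rewrite addnC; by case: (odd (a + b)); case: (odd_perm (tau a b)).
Qed.


Lemma oddE m : odd m = (m %% 2 == 1).
Proof. by rewrite modn2; case: (odd m). Qed.

Definition inS f := exists s, all (fun i => 1 <= i <= n) s /\ f = word_prod n s.

Lemma foldl_pc p (l : seq (pinjmap n)) : foldl (@Defs.pcomp n) p l = pcmp p (foldl (@Defs.pcomp n) (pidm n) l).
Proof.
elim: l p => [|x l IH] p /=; first by rewrite pcomp_id.
by rewrite IH [in RHS]IH pid_comp pcompA.
Qed.

Lemma word_prod_cat s t : word_prod n (s ++ t) = pcmp (word_prod n s) (word_prod n t).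
Proof. by rewrite /word_prod map_cat foldl_cat foldl_pc. Qed.

Lemma inS_comp f g : inS f -> inS g -> inS (pcmp f g).
Proof.
move=> [s [hs ->]] [t [ht ->]]; exists (s ++ t); split; first by rewrite all_cat hs ht.
by rewrite word_prod_cat.
Qed.

Lemma inS_gen i : 1 <= i <= n -> inS (Defs.gen n i).
Proof. move=> hi; exists [:: i]; split; first by rewrite /= hi. by rewrite /word_prod /= pid_comp. Qed.

Lemma AO_comp f g : AO f -> AO g -> AO (pcmp f g).
Proof.
move=> [[pf [s [os hs]]] [_ mf]] [[pg [t [ot ht]]] [_ mg]].
have pfg := pinj_comp pf pg.
split; split => //.
  exists (s * t)%g; split; first by rewrite odd_permM (negbTE os) (negbTE ot).
  move=> x /indomP[w]; rewrite ffunE; case Ef: (f x) => [u|] //= Eg.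
  have xd : x \in pdom f by apply/indomP; exists u.
  have ud : u \in pdom g by apply/indomP; exists w.
  move: (hs x xd); rewrite Ef => -[su]; rewrite permM -su; exact: ht.
exact: (mono_comp mf mg).
Qed.

Lemma AO_pid : AO (pidm n).
Proof.
have pi : pinj (pidm n) by move=> x y; rewrite !ffunE => _ [].
split; split => //.
  by exists 1%g; split; [rewrite odd_perm1 | move=> x _; rewrite ffunE perm1].
by move=> x y fx fy; rewrite !ffunE => [[<-] [<-]].
Qed.

Lemma AO_E a b : ~~ odd (a + b) -> AO (E a b).
Proof.
move=> hab; split; split; try exact: E_pinj.
  exists (tau a b); split; first by rewrite odd_tau.
  by move=> x; rewrite E_dom !inE => hx; rewrite E_tau.
exact: E_mono.
Qed.

Lemma AO_word s : all (fun i => 1 <= i <= n) s ->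
  (forall i, 1 <= i <= n -> AO (Defs.gen n i)) -> AO (word_prod n s).
Proof.
move=> hs hg; rewrite /word_prod.
elim: s (pidm n) AO_pid hs => [|i s IH] p hp //= /andP[hi hs].
by apply: IH => //; apply: AO_comp => //; apply: hg.
Qed.

Lemma Xset_C1 k (a : 'I_n) : val a = k.-1 -> 1 <= k -> Xset n k = [set~ a].
Proof. by move=> ha hk; apply/setP => x; rewrite !inE oeq; move: ha; rewrite valE => ->; lia. Qed.

Lemma gen_E i (a b : 'I_n) : 2 <= n -> 1 <= i <= n -> val a = i.-1 ->
  val b = (gen_target n i).-1 -> Defs.gen n i = E a b.
Proof.
move=> hn hi ha hb.
have ht : 1 <= gen_target n i.
  rewrite /gen_target; case: ifP => h1; [|case: ifP => h2]; case: (odd n); lia.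
rewrite /Defs.gen (Xset_C1 ha) ?(Xset_C1 hb) //; last by case/andP: hi.
have cAB : #|[set~ a]| = #|[set~ b]| by rewrite !cardsC1.
have [pi mo dA iA] := opp_props cAB.
apply: uniqueness => //; [exact: E_pinj|exact: E_mono|by rewrite E_dom|by rewrite E_img].
Qed.


Lemma inS_E2 (a b : 'I_n) : 2 <= n -> val a = b + 2 -> inS (E a b).
Proof.
move=> hn; rewrite ?valE => hab.
rewrite -(@gen_E a.+1 a b) //; first (apply: inS_gen; have := ltn_ord a; lia).
- have := ltn_ord a; lia.
- by rewrite valE /gen_target; case: ifP => h1; [|case: ifP => h2]; lia.
Qed.

Lemma inS_Edown k : forall a b : 'I_n, 2 <= n -> val a = b + 2 * k.+1 -> inS (E a b).
Proof.
elim: k => [|k IH] a b hn; rewrite ?valE => hab.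
  by apply: inS_E2; rewrite ?valE; lia.
have hc : b + 2 * k.+1 < n by have := ltn_ord a; lia.
rewrite -(E_comp a (Ordinal hc) b); apply: inS_comp.
  by apply: inS_E2 => //=; lia.
by apply: IH.
Qed.

Lemma inS_Ep (p b : 'I_n) : 2 <= n -> val p < 2 -> ~~ odd (p + b) -> inS (E p b).
Proof.
rewrite ?valE => hn hp; rewrite oddE => hpb.
have ht : (gen_target n p.+1).-1 < n.
  by rewrite /gen_target; case: ifP => h1; [|case: ifP => h2]; case: (odd n); lia.
have hg : Defs.gen n p.+1 = E p (Ordinal ht) by apply: gen_E => //=; lia.
have hgi : inS (Defs.gen n p.+1) by apply: inS_gen; lia.
rewrite hg in hgi.
set t := Ordinal ht in hgi *.
have vt : nat_of_ord t = (gen_target n p.+1).-1 by [].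
clearbody t.
case: (eqVneq t b) => [<-|hne] //.
rewrite -(E_comp p t b); apply: inS_comp => //.
apply: (@inS_Edown ((nat_of_ord t - b) %/ 2 - 1)) => //; rewrite ?valE.
have hb := ltn_ord b.
move: vt hne; rewrite oeq /gen_target; case: ifP => h1; [|case: ifP => h2]; case hodd: (odd n); rewrite oddE in hodd; lia.
Qed.


Lemma inS_E (a b : 'I_n) : 2 <= n -> ~~ odd (a + b) -> inS (E a b).
Proof.
move=> hn hab.
have hp : a %% 2 < n by have := ltn_pmod a (isT : 0 < 2); lia.
set p := Ordinal hp.
have vp : nat_of_ord p = a %% 2 by [].
clearbody p.
have hpb : ~~ odd (p + b) by move: hab; rewrite !oddE vp; lia.
case: (eqVneq a p) => [->|hne]; first by apply: inS_Ep => //; rewrite ?valE vp; lia.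
rewrite -(E_comp a p b); apply: inS_comp; last by apply: inS_Ep => //; rewrite ?valE vp; lia.
apply: (@inS_Edown ((a - p) %/ 2 - 1)) => //; rewrite ?valE.
by move: hne; rewrite oeq vp; lia.
Qed.

Definition idm (A : {set 'I_n}) : pinjmap n := [ffun x => if x \in A then Some x else None].

Lemma idm_dom A : pdom (idm A) = A.
Proof. by apply/setP => x; rewrite inE ffunE; case: (x \in A). Qed.

Lemma E_hh (h x : 'I_n) : x != h -> E h h x = Some x.
Proof.
move=> hx; rewrite ffunE (negbTE hx); congr Some; apply: val_inj; rewrite !valE val_Emap /shift.
by repeat case: ifP; lia.
Qed.

Lemma inS_idm : 2 <= n -> forall k (A : {set 'I_n}), #|~: A| = k.+1 -> inS (idm A).
Proof.
move=> hn; elim=> [|k IH] A hA.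
  have [h hh] := cards1P (introT eqP hA).
  have -> : idm A = E h h.
    apply: pmapP => x; rewrite ffunE; case: (eqVneq x h) => [->|hx].
      have : h \in ~: A by rewrite hh set11.
      by rewrite inE => /negbTE ->; rewrite ffunE eqxx.
    rewrite E_hh //.
    have : x \notin ~: A by rewrite hh inE.
    by rewrite inE negbK => ->.
  by apply: inS_E => //; rewrite addnn odd_double.
have : 0 < #|~: A| by rewrite hA.
rewrite card_gt0 => /set0Pn[h hh].
have hA' : #|~: (h |: A)| = k.+1.
  have c1 := cardsC (h |: A); have c2 := cardsC A; rewrite cardsU1 in c1.
  move: hh; rewrite inE => hh; rewrite hh in c1; lia.
have -> : idm A = pcmp (idm (h |: A)) (E h h).
  apply: pmapP => x; rewrite !ffunE !inE.
  case: (eqVneq x h) => [->|hx] /=.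
    by move: hh; rewrite inE => /negbTE ->; rewrite ffunE eqxx.
  by case: (x \in A) => //=; rewrite E_hh.
by apply: inS_comp; [apply: IH | apply: inS_E => //; rewrite addnn odd_double].
Qed.

Lemma dom_comp f g : img f \subset pdom g -> pdom (pcmp f g) = pdom f.
Proof.
move=> /subsetP s; apply/setP => x; rewrite !inE ffunE.
case E1: (f x) => [y|] //=.
have : y \in pdom g by apply: s; apply/inimgP; exists x.
by rewrite inE.
Qed.

Lemma img_comp f g : pdom g \subset img f -> img (pcmp f g) = img g.
Proof.
move=> /subsetP s; apply/setP => z; apply/inimgP/inimgP => [[x]|[y hy]].
  rewrite ffunE; case: (f x) => [y|] //= hy; by exists y.
have : y \in img f by apply: s; apply/indomP; exists z.
move/inimgP => [x hx]; exists x; by rewrite ffunE hx.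
Qed.

Lemma idmE_dom (C : {set 'I_n}) a b : a \notin C -> pdom (pcmp (idm C) (E a b)) = C.
Proof.
move=> aC; rewrite dom_comp ?idm_dom //.
apply/subsetP => y /inimgP[x]; rewrite ffunE; case: ifP => // xC [<-].
by rewrite E_dom !inE; apply/eqP => h; rewrite -h xC in aC.
Qed.

Lemma idmE_img (C : {set 'I_n}) a b : a \notin C -> img (pcmp (idm C) (E a b)) = Emap a b @: C.
Proof.
move=> aC; apply/setP => z; apply/inimgP/imsetP => [[x]|[x xC ->]].
  rewrite !ffunE; case: ifP => // xC /=; rewrite ffunE.
  case: ifP => [/eqP h|_ [<-]]; last by exists x.
  by rewrite -h xC in aC.
exists x; rewrite !ffunE xC /= ffunE; case: ifP => // /eqP h.
by rewrite -h xC in aC.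
Qed.


Definition is_move (A : {set 'I_n}) (a b : 'I_n) :=
  [/\ a \notin A, a < b, ~~ odd (a + b) & exists2 y, y \in A & a < y <= b].

Lemma move_lohi (A : {set 'I_n}) (lo hi y0 : 'I_n) : lo \notin A -> hi \notin A -> y0 \in A ->
  lo < hi -> hi < y0 -> odd (lo + y0) -> odd (hi + y0) -> exists a b, is_move A a b.
Proof.
move=> loA hiA y0A lh hy ol oh.
case: (pickP [pred y | (y \in A) && (lo < y <= hi)]) => [y /andP[yA hy1]|none].
  exists lo, hi; split => //; last by exists y.
  by move: ol oh; rewrite !oddE; lia.
have hl : lo.+1 < n by have := ltn_ord y0; lia.
exists (Ordinal hl), y0; split => //=.
- have := none (Ordinal hl); rewrite /= ltnSn /=.
  have -> : lo.+1 <= hi by [].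
  by rewrite andbT => ->.
- by lia.
- by move: ol; rewrite !oddE; lia.
- by exists y0 => //; apply/andP; split => //; lia.
Qed.

Lemma move_ex (A : {set 'I_n}) (a0 y0 : 'I_n) : 2 <= #|~: A| ->
  a0 \notin A -> y0 \in A -> a0 < y0 -> exists a b, is_move A a b.
Proof.
move=> hc aA yA ay.
case oay: (odd (a0 + y0)); last first.
  exists a0, y0; split => //; [by rewrite oay | by exists y0 => //; rewrite ay leqnn].
case: (ltnP y0.+1 n) => hy.
  exists a0, (Ordinal hy); split => //=.
  - by lia.
  - by move: oay; rewrite !oddE; lia.
  - by exists y0 => //; apply/andP; split => //.
have : 0 < #|~: A :\ a0|.
  by have := cardsD1 a0 (~: A); rewrite in_setC aA /= => e; rewrite e in hc.
rewrite card_gt0 => /set0Pn[h]; rewrite !inE => /andP[ha hA].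
have hy0 : h < y0.
  have := ltn_ord h; have := ltn_ord y0.
  have : h != y0 by apply/eqP => e; rewrite e yA in hA.
  rewrite oeq; lia.
case ohy: (odd (h + y0)); last first.
  exists h, y0; split => //; [by rewrite ohy | by exists y0 => //; rewrite hy0 leqnn].
case: (ltngtP a0 h) => [lt|gt|eq].
- exact: (@move_lohi A a0 h y0).
- exact: (@move_lohi A h a0 y0).
- by move: ha; rewrite oeq eq eqxx.
Qed.

Lemma sum_dec (A : {set 'I_n}) a b : is_move A a b ->
  \sum_(x in Emap a b @: A) nat_of_ord x < \sum_(x in A) nat_of_ord x.
Proof.
move=> [aA ab _ [y yA /andP[ay yb]]].
rewrite big_imset /=; last first.
  move=> x z xA zA; apply: Emap_inj.
  - by apply/eqP => e; rewrite -e xA in aA.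
  - by apply/eqP => e; rewrite -e zA in aA.
rewrite (bigD1 y) //= [X in _ < X](bigD1 y) //=.
have h1 : Emap a b y < y by rewrite val_Emap /shift ab ay yb /=; lia.
have h2 : \sum_(i in A | i != y) Emap a b i <= \sum_(i in A | i != y) nat_of_ord i.
  apply: leq_sum => i _; rewrite val_Emap /shift ab; case: ifP => //; lia.
by rewrite -addSn; apply: leq_add.
Qed.

Lemma dc_sub (A B : {set 'I_n}) :
  (forall a y, a \notin A -> y \in A -> ~~ (a < y)) ->
  (forall a y, a \notin B -> y \in B -> ~~ (a < y)) -> #|A| = #|B| -> A \subset B.
Proof.
move=> dA dB cAB; apply/subsetP => x xA; apply/negPn/negP => xB.
have s1 : B \subset [set z : 'I_n | z < x].
  apply/subsetP => z zB; rewrite inE.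
  have := dB _ _ xB zB; rewrite -leqNgt leq_eqVlt => /orP[/eqP e|//].
  have ez : z = x by apply: val_inj; exact: e.
  by move: zB; rewrite ez (negbTE xB).
have s2 : [set z : 'I_n | z <= x] \subset A.
  apply/subsetP => z; rewrite inE => zx; apply/negPn/negP => zA.
  have := dA _ _ zA xA; rewrite -leqNgt => xz.
  have ez : z = x by apply: val_inj; rewrite !valE; lia.
  by rewrite ez xA in zA.
have p : [set z : 'I_n | z < x] \proper [set z : 'I_n | z <= x].
  apply/properP; split; first by apply/subsetP => z; rewrite !inE; apply: ltnW.
  by exists x; rewrite !inE ?leqnn ?ltnn.
have := leq_trans (leq_ltn_trans (subset_leq_card s1) (proper_card p)) (subset_leq_card s2).
by rewrite cAB ltnn.
Qed.


Lemma idm_img A : img (idm A) = A.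
Proof.
apply/setP => y; apply/inimgP/idP => [[x]|yA]; last by exists y; rewrite ffunE yA.
by rewrite ffunE; case: ifP => // xA [<-].
Qed.

Lemma card_move (A : {set 'I_n}) a b : is_move A a b -> #|Emap a b @: A| = #|A|.
Proof.
move=> [aA _ _ _]; rewrite card_in_imset // => x z xA zA; apply: Emap_inj.
- by apply/eqP => e; rewrite -e xA in aA.
- by apply/eqP => e; rewrite -e zA in aA.
Qed.

Lemma cardC_eq (A B : {set 'I_n}) : #|A| = #|B| -> #|~: A| = #|~: B|.
Proof. move=> e; have e1 := cardsC A; have e2 := cardsC B; rewrite e in e1; rewrite -e2 in e1; lia. Qed.

Lemma inS_idm' (A : {set 'I_n}) : 2 <= n -> 1 <= #|~: A| -> inS (idm A).
Proof. move=> hn h; apply: (@inS_idm hn (#|~: A|.-1)); lia. Qed.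

Lemma reach : 2 <= n -> forall m (A B : {set 'I_n}),
  \sum_(x in A) nat_of_ord x + \sum_(x in B) nat_of_ord x < m ->
  #|A| = #|B| -> 2 <= #|~: A| -> exists g, [/\ inS g, pdom g = A & img g = B].
Proof.
move=> hn; elim=> [|m IH] A B hm cAB hc //.
have hcB : 2 <= #|~: B| by rewrite -(cardC_eq cAB).
case: (pickP [pred p : 'I_n * 'I_n | (p.1 \notin A) && (p.2 \in A) && (p.1 < p.2)]) =>
  [[a0 y0] /= /andP[/andP[aA yA] ay] | noA].
  have [a [b mv]] := move_ex hc aA yA ay.
  have [aA' _ oab _] := mv.
  have cA' := card_move mv.
  have sd := sum_dec mv.
  have [g [gS gd gi]] : exists g, [/\ inS g, pdom g = Emap a b @: A & img g = B].
    apply: IH; [ | by rewrite cA' | by rewrite (cardC_eq cA')].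
    by rewrite -ltnS; apply: leq_trans hm; rewrite ltnS ltn_add2r.
  exists (pcmp (pcmp (idm A) (E a b)) g); split.
  - apply: inS_comp => //; apply: inS_comp; first by apply: inS_idm'; lia.
    exact: inS_E.
  - by rewrite dom_comp ?idmE_dom // gd idmE_img.
  - by rewrite img_comp // gd idmE_img.
case: (pickP [pred p : 'I_n * 'I_n | (p.1 \notin B) && (p.2 \in B) && (p.1 < p.2)]) =>
  [[a0 y0] /= /andP[/andP[aB yB] ay] | noB].
  have [a [b mv]] := move_ex hcB aB yB ay.
  have [aB' _ oab _] := mv.
  have cB' := card_move mv.
  have sd := sum_dec mv.
  set B' := Emap a b @: B.
  have bB' : b \notin B'.
    apply/imsetP => -[x xB e].
    have xa : x != a by apply/eqP => e'; rewrite -e' xB in aB'.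
    by move: (Emap_neq b xa); rewrite -e eqxx.
  have [g [gS gd gi]] : exists g, [/\ inS g, pdom g = A & img g = B'].
    apply: IH => //; [ | by rewrite cB'].
    by rewrite -ltnS; apply: leq_trans hm; rewrite ltnS ltn_add2l.
  exists (pcmp g (pcmp (idm B') (E b a))); split.
  - apply: inS_comp => //; apply: inS_comp; first by apply: inS_idm' => //; rewrite /B' (cardC_eq cB'); lia.
    by apply: inS_E => //; rewrite addnC.
  - by rewrite dom_comp ?idmE_dom // gi.
  - rewrite img_comp ?idmE_dom ?idmE_img ?gi //.
    rewrite /B' -imset_comp; apply/setP => z; apply/imsetP/idP => [[x xB ->]|zB].
      by rewrite /= Emap_inv //; apply/eqP => e'; rewrite -e' xB in aB'.
    by exists z => //=; rewrite Emap_inv //; apply/eqP => e'; rewrite -e' zB in aB'.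
have dA : forall a y, a \notin A -> y \in A -> ~~ (a < y).
  by move=> a y h1 h2; have := noA (a, y); rewrite /= h1 h2 /= => ->.
have dB : forall a y, a \notin B -> y \in B -> ~~ (a < y).
  by move=> a y h1 h2; have := noB (a, y); rewrite /= h1 h2 /= => ->.
have eAB : A = B.
  by apply/eqP; rewrite eqEcard (dc_sub dA dB cAB) cAB leqnn.
exists (idm A); split; [by apply: inS_idm'; lia | exact: idm_dom | by rewrite idm_img].
Qed.

End Basics.

Lemma gen_AO n i : 2 <= n -> 1 <= i <= n -> AO (Defs.gen n i).
Proof.
move=> hn hi.
have h1 : i.-1 < n by lia.
have h2 : (gen_target n i).-1 < n.
  by rewrite /gen_target; case: ifP => e1; [|case: ifP => e2]; case: (odd n); lia.
rewrite (@gen_E n i (Ordinal h1) (Ordinal h2)) //; apply: AO_E => /=.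
rewrite oddE /gen_target; case: ifP => e1; [|case: ifP => e2]; case hodd: (odd n);
  rewrite oddE in hodd; lia.
Qed.

Unset Implicit Arguments.

Theorem proposition4p7 (n : nat) : 2 <= n ->
  forall f : pinjmap n,
    AO f <-> exists s : seq nat, all (fun i => (1 <= i <= n)) s /\ f = word_prod n s.
Proof.
move=> hn f; split; last first.
  by move=> [s [hs ->]]; apply: AO_word => // i hi; apply: gen_AO.
move=> hAO; have [[pf [sg [osg hsg]]] [_ mf]] := hAO.
have cBA := card_img pf.
have cC := cardC_eq cBA.
have [pi0 mo0] : pinj (pidm n) /\ mono (pidm n) by have [[? _] [? ?]] := @AO_pid n.
case hk: #|~: pdom f| => [|[|k]].
-
  have dT : pdom f = setT.
    by apply/setP => x; rewrite in_setT; move: (card0_eq hk x); rewrite in_setC /=; case: (x \in pdom f).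
  have iT : img f = setT.
    by apply/setP => x; rewrite in_setT; move: (card0_eq (etrans cC hk) x); rewrite in_setC /=; case: (x \in img f).
  exists [::]; split => //; rewrite /word_prod /=.
  apply: uniqueness => //.
    by rewrite dT; apply/setP => x; rewrite !inE ffunE.
  by rewrite iT; apply/setP => x; rewrite in_setT; symmetry; apply/inimgP; exists x; rewrite ffunE.
- have [a ha] := cards1P (introT eqP hk).
  have [b hb] : exists b, ~: img f = [set b] by apply/cards1P; rewrite cC hk.
  have dA : pdom f = [set~ a] by rewrite -ha setCK.
  have iB : img f = [set~ b] by rewrite -hb setCK.
  have fE : f = E a b.
    by apply: uniqueness => //; [exact: E_pinj|exact: E_mono|rewrite E_dom|rewrite E_img].
  have sgt : sg = tau a b.
    apply/permP => x; case: (eqVneq x a) => [->|hx]; last first.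
      have : x \in pdom f by rewrite dA !inE.
      by move/hsg; rewrite fE E_tau // => -[e]; rewrite e.
    rewrite tauE /tf eqxx; apply/eqP; case: (eqVneq (sg a) b) => // hne.
    have : sg a \in img f by rewrite iB !inE.
    move/inimgP => [z hx].
    have xd : z \in pdom f by apply/indomP; exists (sg a).
    have := hsg z xd; rewrite hx => -[] /perm_inj e.
    move: xd; rewrite dA !inE e eqxx //.
  have hab : ~~ odd (a + b) by rewrite -odd_tau -sgt.
  by rewrite fE; apply: inS_E.
- have hc2 : 2 <= #|~: pdom f| by rewrite hk.
  have [g [gS gd gi]] := @reach n hn (\sum_(x in pdom f) nat_of_ord x + \sum_(x in img f) nat_of_ord x).+1
     (pdom f) (img f) (ltnSn _) (esym cBA) hc2.
  have [s [hs gs]] := gS.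
  exists s; split => //; rewrite -gs.
  have [[pg _] [_ mg]] : AO g by rewrite gs; apply: AO_word => // i hi; apply: gen_AO.
  by apply: uniqueness.
Qed.
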